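(* If a $\sigma$-structure $\mathcal{A}$ has a $\mathfrak{g}$-guarded decomposition $\tau$, then $|A| \geq |\mathsf{MaxGuarded}(\mathcal{A})|$, where $\mathsf{MaxGuarded}(\mathcal{A})$ is the set of maximal $\mathfrak{g}$-guarded subsets of $A$.
   Context: $\mathfrak{g}$ is atom, loose or clique guarding; plays are non-empty lists of $\mathfrak{g}$-guarded sets, ordered by prefix $\sqsubseteq$, with $\lambda(p)$ the last element; $[p,a]$ denotes the class of the focussed play $\langle p,a\rangle$ ($a\in\lambda(p)$) under $\langle p,a\rangle\sim\langle q,a'\rangle$ iff $a=a'$, $p\sqcap q$ non-empty, and $a\in\lambda(u)$ for all $u$ on the prefix-order paths from $p\sqcap q$ to $p$ and $q$. A $\mathfrak{g}$-guarded decomposition is a map $\tau$ from $A$ to plays, with image $P_\tau$, that is reflexive ($a\in\lambda(\tau(a))$), edge covering (Gaifman-adjacent elements lie together in some $\lambda(p)$, $p\in P_\tau$), minimal ($[\tau(a),a]=[q,a]$ implies $\tau(a)\sqsubseteq q$) and vertex connected (for $q$ below some element of $P_\tau$ with $a\in\lambda(q)$, $[\tau(a),a]=[q,a]$). *)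

(* Defs.v *)
From mathcomp Require Import all_boot.
From mathcomp Require Import boolp.
Set Implicit Arguments. Unset Strict Implicit. Unset Printing Implicit Defensive.

(* A sigma-structure: relation symbols [sym] with arities [ar], a finite
   domain [A], and an interpretation [I R] of each symbol as a predicate on
   (ar R)-tuples of A. *)

Inductive guarding := AtomG | LooseG | CliqueG.

Section Guarded.
Variables (sym : Type) (ar : sym -> nat) (A : finType).
Variable I : forall R : sym, (ar R).-tuple A -> Prop.

Definition gaifman_adj (a b : A) : Prop :=
  a != b /\ exists (R : sym) (t : (ar R).-tuple A), I t /\ a \in tval t /\ b \in tval t.

Definition atom_guarded (X : {set A}) : Prop :=
  X != set0 /\
  ((exists a, X = [set a]) \/
   exists (R : sym) (t : (ar R).-tuple A), I t /\ X = [set x in tval t]).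

Definition loose_guarded (X : {set A}) : Prop :=
  X != set0 /\
  forall a b, a \in X -> b \in X -> exists Y, atom_guarded Y /\ a \in Y /\ b \in Y.

Definition clique_guarded (X : {set A}) : Prop :=
  X != set0 /\ forall a b, a \in X -> b \in X -> a != b -> gaifman_adj a b.

Definition guarded (g : guarding) (X : {set A}) : Prop :=
  match g with
  | AtomG => atom_guarded X
  | LooseG => loose_guarded X
  | CliqueG => clique_guarded X
  end.

Definition max_guarded (g : guarding) (X : {set A}) : Prop :=
  guarded g X /\ forall Y, guarded g Y -> X \subset Y -> X = Y.

Definition MaxGuarded (g : guarding) : {set {set A}} :=
  [set X | `[< max_guarded g X >]].

Definition play (g : guarding) (p : seq {set A}) : Prop :=
  p != [::] /\ forall X, X \in p -> guarded g X.

Definition lam (p : seq {set A}) : {set A} := last set0 p.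

Fixpoint meet (p q : seq {set A}) : seq {set A} :=
  match p, q with
  | x :: p', y :: q' => if x == y then x :: meet p' q' else [::]
  | _, _ => [::]
  end.

Definition fsim (p : seq {set A}) (a : A) (q : seq {set A}) (a' : A) : Prop :=
  a = a' /\ meet p q != [::] /\
  forall u, prefix (meet p q) u -> (prefix u p \/ prefix u q) -> a \in lam u.

(* [p,a] = [q,a'] (equality of ~-classes, ~ being an equivalence) *)
Definition same_class p a q a' : Prop := fsim p a q a'.

Definition guarded_decomposition (g : guarding) (tau : A -> seq {set A}) : Prop :=
  (forall a, play g (tau a)) /\
  (forall a, a \in lam (tau a)) /\
  (forall a b, gaifman_adj a b -> exists c, a \in lam (tau c) /\ b \in lam (tau c)) /\
  (forall a q, play g q -> a \in lam q -> same_class (tau a) a q a -> prefix (tau a) q) /\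
  (forall a q, play g q -> (exists c, prefix q (tau c)) -> a \in lam q ->
     same_class (tau a) a q a).

End Guarded.

(* Main.v *)
Require Import Defs.
From mathcomp Require Import all_boot.
From mathcomp Require Import boolp.
Set Implicit Arguments. Unset Strict Implicit. Unset Printing Implicit Defensive.

Lemma meet_prefix (T : finType) (p q : seq {set T}) : prefix p q -> meet p q = p.
Proof.
elim: p q => [|x p IH] [|y q] //=.
rewrite /prefix /= -/(prefix p q).
case: eqP => [-> H|//]; by rewrite IH.
Qed.

Lemma prefix_comp (T : eqType) (p q r : seq T) :
  prefix p r -> prefix q r -> size p <= size q -> prefix p q.
Proof.
rewrite !prefixE => /eqP Hp /eqP Hq Hs.
by rewrite -Hq take_takel // Hp.
Qed.

Section S.
Variables (sym : Type) (ar : sym -> nat) (A : finType).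
Variable I : forall R : sym, (ar R).-tuple A -> Prop.

Lemma atom_adj (Y : {set A}) a b : atom_guarded I Y -> a \in Y -> b \in Y -> a != b ->
  gaifman_adj I a b.
Proof.
move=> [_ [[c ->]|[R [t [It ->]]]]] Ha Hb Hab.
  by move: Ha Hb Hab; rewrite !in_set1 => /eqP -> /eqP ->; rewrite eqxx.
split=> //; exists R, t; split=> //; by rewrite !inE in Ha Hb.
Qed.

Lemma guarded_clique g (X : {set A}) : guarded I g X ->
  X != set0 /\ forall a b, a \in X -> b \in X -> a != b -> gaifman_adj I a b.
Proof.
case: g => /=.
- move=> H; split; first by case: H.
  by move=> a b; apply: atom_adj.
- move=> [H0 H]; split=> // a b Ha Hb Hab.
  have [Y [HY [Ya Yb]]] := H a b Ha Hb; exact: atom_adj HY Ya Yb Hab.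
- by [].
Qed.
End S.

Theorem proposition4p5 (sym : Type) (ar : sym -> nat) (A : finType)
  (I : forall R : sym, (ar R).-tuple A -> Prop) (g : guarding)
  (tau : A -> seq {set A}) :
  guarded_decomposition I g tau -> #|MaxGuarded I g| <= #|A|.
Proof.
move=> [Hplay [Hrefl [Hedge [Hmin Hvc]]]].
have Hlamg : forall a, guarded I g (lam (tau a)).
  move=> a; have [Hne Hall] := Hplay a; apply: Hall.
  rewrite /lam; case: (tau a) Hne => [|x s] //= _; exact: mem_last.
have Hpre : forall b c, b \in lam (tau c) -> prefix (tau b) (tau c) /\
   same_class (tau b) b (tau c) b.
  move=> b c Hb.
  have Hs : same_class (tau b) b (tau c) b.
    apply: Hvc; [exact: Hplay | by exists c; rewrite prefix_refl | exact: Hb].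
  split=> //; apply: Hmin => //; exact: Hplay.
suff: MaxGuarded I g \subset [set lam (tau a) | a in A].
  move=> H; apply: leq_trans (subset_leq_card H) _; exact: leq_imset_card.
apply/subsetP => X; rewrite inE => /asboolP [HX Hmax].
have [Hne Hcl] := guarded_clique HX.
have [a0 Ha0] := set0Pn X Hne.
case: (@arg_maxnP A a0 (fun x => x \in X) (fun x => size (tau x)) Ha0) => b Hb Hbmax.
have Hsub : X \subset lam (tau b).
  apply/subsetP => b' Hb'.
  case: (eqVneq b' b) => [->|Hneq]; first exact: Hrefl.
  have [c [Hc1 Hc2]] := Hedge _ _ (Hcl _ _ Hb' Hb Hneq).
  have [Pb _] := Hpre _ _ Hc2.
  have [Pb' [_ [_ Hu]]] := Hpre _ _ Hc1.
  apply: Hu; last by right.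
  rewrite meet_prefix //; apply: prefix_comp Pb' Pb _; exact: Hbmax.
have := Hmax _ (Hlamg b) Hsub => ->.
by apply/imsetP; exists b.
Qed.
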